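(* In the type $\mathbb A$ setting described in the context, for all $0\le i\le m-2$ we have $$x_{i+2}=x_1[i+1]\,x_{i+1}-x_i\qquad\text{and}\qquad x_{i+1}[1]=x_1[i+1]\,x_i[1]-x_{i-1}[1],$$ where $x_j=x_j[0]$.
   Context: Let $K$ be a field of characteristic $0$ or $K=\mathbb Z$, let $n\ge1$, $m=n+1$, $p=n$, and $\mathcal F=K(X_1,\dots,X_m)$. Let $B=(b_{ij})\in M_{m,n}(\mathbb Z)$ have $b_{i,i+1}=-1$ for $1\le i\le n-1$, $b_{i+1,i}=1$ for $1\le i\le n$, and all other entries $0$. Let $\mathbf x=(x_1,\dots,x_m)$ be algebraically independent over $K$ in $\mathcal F$. For $1\le k\le n$ the mutation $\mu_k(\mathbf y,C)=(\mathbf y',C')$ of a pair $(\mathbf y,C)$ is given by $c'_{ij}=-c_{ij}$ if $i=k$ or $j=k$, and $c'_{ij}=c_{ij}+\frac{|c_{ik}|c_{kj}+c_{ik}|c_{kj}|}{2}$ otherwise; $y'_s=y_s$ for $s\neq k$ and $y'_k=y_k^{-1}\big(\prod_{c_{ik}>0}y_i^{c_{ik}}+\prod_{c_{ik}<0}y_i^{-c_{ik}}\big)$. Set $(\mathbf x[0],B[0])=(\mathbf x,B)$ and, for $1\le i\le m-1$, $(\mathbf x[i],B[i])=\mu_{m-i}\cdots\mu_2\mu_1(\mathbf x[i-1],B[i-1])$ (apply $\mu_1$ first). Write $\mathbf x[i]=(x_1[i],\dots,x_m[i])$ and use the conventions $x_0[i]=1$, $x_{-1}[i]=0$ for all $i$.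 *)

(* Defs.v *)
From HB Require Import structures.
From mathcomp Require Import all_boot all_order all_algebra.
From mathcomp Require Import fraction.
From mathcomp Require Import mpoly.
Set Implicit Arguments. Unset Strict Implicit. Unset Printing Implicit Defensive.
Import Order.TTheory GRing.Theory Num.Theory.
Local Open Scope ring_scope.

(* Indices are 1-based natural numbers, as in the paper.  A "seed" is a pair
   (y, C) with y : nat -> F (only y_1..y_m matter) and C : nat -> nat -> int
   (only the entries c_ij, 1 <= i <= m, 1 <= j <= n matter). *)

Definition FracF (K : idomainType) (m : nat) := {fraction {mpoly K[m]}}.

Definition alg_indep (K : idomainType) (m : nat) (x : nat -> FracF K m) : Prop :=
  forall p : {mpoly K[m]},
    mmap (fun c : K => tofrac (c%:MP)) (fun i : 'I_m => x i.+1) p = 0 -> p = 0.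

Definition Bmat (n : nat) (i j : nat) : int :=
  if [&& j == i.+1, 1 <= i & i <= n.-1]%N then -1
  else if [&& i == j.+1, 1 <= j & j <= n]%N then 1
  else 0.

Definition mutC (k : nat) (C : nat -> nat -> int) : nat -> nat -> int :=
  fun i j =>
    if (i == k) || (j == k) then - C i j
    else C i j + ((`|C i k| * C k j + C i k * `|C k j|) %/ 2)%Z.

Definition mutY (F : fieldType) (m k : nat) (y : nat -> F) (C : nat -> nat -> int)
  : nat -> F :=
  fun s =>
    if s == k then
      (y k)^-1 * (\prod_(1 <= i < m.+1 | 0 < C i k) y i ^+ `|C i k|%N
                  + \prod_(1 <= i < m.+1 | C i k < 0) y i ^+ `|C i k|%N)
    else y s.

Definition mu (F : fieldType) (m k : nat)
  (s : (nat -> F) * (nat -> nat -> int)) : (nat -> F) * (nat -> nat -> int) :=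
  (mutY m k s.1 s.2, mutC k s.2).

(* (x[0],B[0]) = (x,B);
   (x[i],B[i]) = mu_{m-i} ... mu_2 mu_1 (x[i-1],B[i-1])  (mu_1 applied first). *)
Fixpoint seed (F : fieldType) (n : nat) (x : nat -> F) (i : nat)
  : (nat -> F) * (nat -> nat -> int) :=
  match i with
  | 0 => (x, Bmat n)
  | i'.+1 => foldl (fun s k => mu n.+1 k s) (seed n x i') (iota 1 (n.+1 - i'.+1))
  end.

Definition xc (F : fieldType) (n : nat) (x : nat -> F) (j : int) (i : nat) : F :=
  if j == -1 then 0
  else if j == 0 then 1
  else (seed n x i).1 `|j|%N.

Definition cor_stmt (K : idomainType) : Prop :=
  forall (n : nat), (1 <= n)%N ->
  forall x : nat -> FracF K n.+1, alg_indep x ->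
  forall i : nat, (i <= n.+1 - 2)%N ->
    xc n x (i%:Z + 2) 0 = xc n x 1 i.+1 * xc n x (i%:Z + 1) 0 - xc n x i%:Z 0 /\
    xc n x (i%:Z + 1) 1 = xc n x 1 i.+1 * xc n x i%:Z 1 - xc n x (i%:Z - 1) 1.

(* Main.v *)
Require Import Defs.
From HB Require Import structures.
From mathcomp Require Import all_boot all_order all_algebra.
From mathcomp Require Import fraction mpoly.
From mathcomp Require Import zify ring.
From Stdlib Require Import FunctionalExtensionality.
Set Implicit Arguments. Unset Strict Implicit. Unset Printing Implicit Defensive.
Import Order.TTheory GRing.Theory Num.Theory.
Local Open Scope ring_scope.

Lemma prod_pt (R : comRingType) (g : nat -> R) lo hi a : (lo <= a < hi)%N ->
  \prod_(lo <= i < hi) (if i == a then g i else 1) = g a.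
Proof.
move=> /andP[h1 h2].
rewrite (big_cat_nat h1 (ltnW h2)) [\prod_(a <= i < hi) _]big_ltn //= eqxx.
rewrite big1_seq; last by move=> i /andP[_]; rewrite mem_index_iota => hh; have -> : (i == a) = false by lia.
rewrite big1_seq; last by move=> i /andP[_]; rewrite mem_index_iota => hh; have -> : (i == a) = false by lia.
by rewrite mul1r mulr1.
Qed.

Section Mat.
Variable n : nat.

Definition Mat (s : nat -> int) (a b : nat) : int :=
  if (a == b.+1) && (1 <= b <= n)%N then s b
  else if [&& b == a.+1, (1 <= a)%N & (b <= n)%N] then - s a else 0.

Lemma Mat_ext s s' : (forall b, (1 <= b <= n)%N -> s b = s' b) -> Mat s = Mat s'.
Proof.
move=> h; apply: functional_extensionality => a; apply: functional_extensionality => b.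
rewrite /Mat; case: ifP => [/andP[_ hb]|_]; first by rewrite h.
case: ifP => [/and3P[/eqP hb h1 h2]|_] //; rewrite h //; lia.
Qed.

Lemma Bmat_Mat : Bmat n = Mat (fun _ => 1).
Proof.
apply: functional_extensionality => a; apply: functional_extensionality => b.
rewrite /Bmat /Mat.
case: (eqVneq a b.+1) => [->|ne].
  have -> : (b == b.+2) = false by lia.
  by case: (1 <= b <= n)%N.
case: (eqVneq b a.+1) => [->|ne2] /=; last first.
  by case: ((1 <= a)%N && (a <= n.-1)%N).
case: (posnP a) => [->//|ha].
have -> : ((a <= n.-1) = (a.+1 <= n))%N by lia.
by [].
Qed.

Lemma Mat_ge0 s k i : ((1 < k)%N -> s k.-1 = -1) -> s k = 1 -> 0 <= Mat s i k.
Proof.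
move=> h1 h2; rewrite /Mat; case: ifP => [_|_]; first by rewrite h2.
case: ifP => [/and3P[/eqP hk hi _]|_] //.
have -> : i = k.-1 by rewrite hk.
by rewrite h1 // hk.
Qed.

Lemma Mat_le0 s k j : ((1 < k)%N -> s k.-1 = -1) -> s k = 1 -> Mat s k j <= 0.
Proof.
move=> h1 h2; rewrite /Mat; case: ifP => [/andP[/eqP hk /andP[hj _]]|_].
  have -> : j = k.-1 by rewrite hk.
  by rewrite h1 // hk.
case: ifP => [/and3P[/eqP hk hi _]|_] //.
by rewrite h2.
Qed.

Lemma mutC_sink s k : (1 <= k <= n)%N -> ((1 < k)%N -> s k.-1 = -1) -> s k = 1 ->
  mutC k (Mat s) =
  Mat (fun j => if (j == k) || ((j == k.-1) && (1 < k)%N) then - s j else s j).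
Proof.
move=> hk h1 h2.
apply: functional_extensionality => a; apply: functional_extensionality => b.
rewrite /mutC.
case: (eqVneq a k) => [->|nak] /=.
  rewrite /Mat.
  case: ifP => [/andP[/eqP ek hb]|_].
    have -> : (b == k) = false by lia.
    by have -> : (b == k.-1) && (1 < k)%N by lia.
  case: ifP => [/and3P[/eqP eb hb1 hb2]|_] //.
  by rewrite eqxx.
case: (eqVneq b k) => [->|nbk] /=.
  rewrite /Mat.
  case: ifP => [/andP[/eqP ek hb]|_]; first by rewrite eqxx.
  case: ifP => [/and3P[/eqP eb hb1 hb2]|_] //.
  have -> : (a == k) = false by lia.
  by have -> : (a == k.-1) && (1 < k)%N by lia.
have g1 := Mat_ge0 a h1 h2; have g2 := Mat_le0 b h1 h2.
have -> : (`|Mat s a k| * Mat s k b + Mat s a k * `|Mat s k b|) = 0.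
  rewrite (ger0_norm g1) (ler0_norm g2); ring.
rewrite div0z addr0 /Mat.
case: ifP => [/andP[/eqP ea hb]|_].
  have -> : (b == k) = false by lia.
  by have -> : (b == k.-1) && (1 < k)%N = false by lia.
case: ifP => [/and3P[/eqP eb hb1 hb2]|_] //.
have -> : (a == k) = false by lia.
by have -> : (a == k.-1) && (1 < k)%N = false by lia.
Qed.

End Mat.

Lemma mutY_sink (F : fieldType) n (y : nat -> F) s k : (1 <= k <= n)%N ->
  ((1 < k)%N -> s k.-1 = -1) -> s k = 1 ->
  mutY n.+1 k y (Mat n s) = fun j => if j == k then
     (y k)^-1 * ((if (1 < k)%N then y k.-1 else 1) * y k.+1 + 1) else y j.
Proof.
move=> /andP[hk1 hk2] h1 h2; apply: functional_extensionality => j.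
rewrite /mutY; case: (j == k) => //; congr (_ * _).
rewrite [X in _ + X]big1_seq; last first.
  by move=> i /andP[hi _]; rewrite ltNge Mat_ge0 in hi.
congr (_ + _); rewrite big_mkcond /=.
rewrite (@eq_big_nat _ _ _ _ _ _ (fun i => (if i == k.+1 then y i else 1) *
   (if (i == k.-1) && (1 < k)%N then y i else 1))); last first.
  move=> i /andP[hi1 hi2].
  case: (eqVneq i k.+1) => [->|ne].
    rewrite /Mat eqxx hk1 hk2 h2 /= expr1.
    have -> : (k.+1 == k.-1) = false by lia.
    by rewrite mulr1.
  rewrite /Mat (negbTE ne) /=.
  case: (eqVneq k i.+1) => [ek|nk] /=.
    rewrite hi1 hk2 andbT.
    have ei : i = k.-1 by rewrite ek.
    have hk3 : (1 < k)%N by lia.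
    rewrite ei h1 // opprK ltr01 -ei eqxx hk3 andbT mul1r.
    by rewrite expr1.
  case: (eqVneq i k.-1) => [ei|_]; last by rewrite mulr1.
  have hk : (1 < k)%N = false.
    by apply/negbTE; apply: contra nk => hk; rewrite ei (prednK (ltnW hk)).
  by rewrite hk mulr1.
rewrite big_split (prod_pt y); last by apply/andP; split => //; lia.
case: (ltnP 1 k) => hk.
  under eq_big_nat => i _ do rewrite andbT.
  rewrite (prod_pt y) 1?mulrC //.
  by apply/andP; split; lia.
have hk' : (1 < k)%N = false by lia.
rewrite big1_seq; last by move=> i _; rewrite andbF.
by change (y k.+1 * 1 = 1 * y k.+1); rewrite mulr1 mul1r.
Qed.

Section Seed.
Variables (F : fieldType) (n : nat) (x : nat -> F).

Definition sb i j : int := if (j < n.+1 - i)%N then 1 else -1.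
Definition sk i k j : int := if (j == k) && (0 < k)%N then - sb i j else sb i j.
Definition step (y : nat -> F) k := fun j => if j == k then
     (y k)^-1 * ((if (1 < k)%N then y k.-1 else 1) * y k.+1 + 1) else y j.
Definition val i := (seed n x i).1.
Fixpoint yst i k := match k with 0 => val i | k'.+1 => step (yst i k') k'.+1 end.
Definition st i k := foldl (fun s k => mu n.+1 k s) (seed n x i) (iota 1 k).

Lemma st_spec i k : (k <= n - i)%N -> (seed n x i).2 = Mat n (sb i) ->
  st i k = (yst i k, Mat n (sk i k)).
Proof.
move=> + hs; elim: k => [_|k IH hk]; rewrite /st.
  rewrite /= /val; case: (seed n x i) hs => a b /= ->.
  by congr pair; apply: Mat_ext => b0 _; rewrite /sk andbF.
have -> : iota 1 k.+1 = iota 1 k ++ [:: k.+1] by have := iotaD 1 k 1; rewrite addn1 add1n.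
rewrite foldl_cat -/(st i k) IH; last by lia.
rewrite /= /mu /=.
have hsk1 : sk i k k.+1 = 1.
  rewrite /sk /sb; have -> : (k.+1 == k) = false by lia.
  by have -> : (k.+1 < n.+1 - i)%N by lia.
have hsk2 : (1 < k.+1)%N -> sk i k k.+1.-1 = -1.
  move=> h1; rewrite /= /sk /sb eqxx; have -> : (0 < k)%N by lia.
  by have -> : (k < n.+1 - i)%N by lia.
have hk' : (1 <= k.+1 <= n)%N by apply/andP; split; lia.
rewrite (mutY_sink (yst i k) hk' hsk2 hsk1) (mutC_sink hk' hsk2 hsk1).
congr pair; apply: Mat_ext => b hb.
rewrite /sk /=.
case: (eqVneq b k.+1) => [->|ne] /=.
  by have -> : (k.+1 == k) = false by lia.
case: (eqVneq b k) => [eb|ne2] /=.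
  subst b; have kp : (0 < k)%N by lia.
  by rewrite ltnS kp /= opprK.
by [].
Qed.

Lemma seed_succ i : seed n x i.+1 = st i (n - i).
Proof. by rewrite /st /= subSS. Qed.

Lemma seed_mat i : (i <= n)%N -> (seed n x i).2 = Mat n (sb i).
Proof.
elim: i => [_|i IH hi].
  rewrite /= Bmat_Mat; apply: Mat_ext => b hb.
  by rewrite /sb subn0; have -> : (b < n.+1)%N by lia.
rewrite seed_succ st_spec //=; last by apply: IH; lia.
apply: Mat_ext => b hb; rewrite /sk /sb.
case: (eqVneq b (n - i)%N) => [eb|ne] /=.
  have -> : (0 < n - i)%N by lia.
  have -> : (b < n.+1 - i)%N by lia.
  by have -> : (b < n.+1 - i.+1)%N = false by lia.
have -> : (b < n.+1 - i)%N = (b < n.+1 - i.+1)%N by lia.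
by [].
Qed.

Lemma yst_gt i k j : (k < j)%N -> yst i k j = val i j.
Proof.
elim: k => // k IH h; rewrite /= /step.
have -> : (j == k.+1) = false by lia.
by apply: IH; lia.
Qed.

Lemma yst_le i k k' j : (j <= k)%N -> (k <= k')%N -> yst i k' j = yst i k j.
Proof.
elim: k' => [|k' IH] hj hk; first by have -> : k = 0%N by lia.
case: (eqVneq k k'.+1) => [->//|ne].
rewrite /= /step; have -> : (j == k'.+1) = false by lia.
by apply: IH => //; lia.
Qed.

Lemma val_yst i : (i <= n)%N -> val i.+1 = yst i (n - i).
Proof.
move=> hi; rewrite /val seed_succ st_spec //.
by apply: seed_mat.
Qed.

Lemma val_succ i j : (i <= n)%N -> (1 <= j <= n - i)%N ->
  val i.+1 j = (val i j)^-1 * ((if (1 < j)%N then val i.+1 j.-1 else 1) * val i j.+1 + 1).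
Proof.
move=> hi /andP[hj1 hj2]; rewrite val_yst // (@yst_le i j (n - i) j) //.
case: j hj1 hj2 => // j _ hj2.
rewrite /= /step eqxx (@yst_gt i j j.+1 (ltnSn j)) (@yst_gt i j j.+2 (ltnW (ltnSn j.+1))).
case: (posnP j) => [->//|jp].
by rewrite (@yst_le i j (n - i) j) //; lia.
Qed.

Lemma val_succ_gt i j : (i <= n)%N -> (n - i < j)%N -> val i.+1 j = val i j.
Proof. by move=> hi hj; rewrite val_yst // yst_gt. Qed.

Lemma val0 : val 0 = x.
Proof. by []. Qed.

End Seed.

Lemma aux_div (F : fieldType) (v Y : F) : v != 0 -> v * (v^-1 * (Y + 1)) - Y = 1.
Proof. by move=> h; rewrite mulrA (mulfV h) mul1r addrAC subrr add0r. Qed.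

Section Main.
Variables (K : idomainType) (n : nat).
Hypothesis charK : forall k : nat, (k.+1)%:R != 0 :> K.
Variable x : nat -> FracF K n.+1.
Hypothesis hx : alg_indep x.

Definition fc : {rmorphism K -> FracF K n.+1} := ((@tofrac _) \o (@mpolyC n.+1 K))%FUN.
Definition phi (P : {mpoly K[n.+1]}) : FracF K n.+1 :=
  mmap fc (fun i : 'I_n.+1 => x i.+1) P.
Definition pos (P : {mpoly K[n.+1]}) := exists k : nat, meval (fun _ => 1) P = k.+1%:R.
Definition good (y : FracF K n.+1) := exists P Q, [/\ pos P, pos Q & y = phi P / phi Q].

Lemma pos_add P Q : pos P -> pos Q -> pos (P + Q).
Proof.
case=> a ha [b hb]; exists (a + b).+1; rewrite mevalD ha hb -natrD.
by congr (_%:R); lia.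
Qed.

Lemma pos_mul P Q : pos P -> pos Q -> pos (P * Q).
Proof.
case=> a ha [b hb]; exists (a * b + a + b)%N; rewrite mevalM ha hb -natrM.
by congr (_%:R); lia.
Qed.

Lemma pos1 : pos 1.
Proof. by exists 0%N; rewrite meval1. Qed.

Lemma phi_nz P : pos P -> phi P != 0.
Proof.
case=> a ha; apply/eqP => h0.
have P0 : P = 0 by apply: hx; exact: h0.
by move: ha; rewrite P0 meval0 => /esym/eqP; rewrite (negbTE (charK a)).
Qed.

Lemma good_nz y : good y -> y != 0.
Proof.
case=> P [Q [hP hQ ->]].
by rewrite mulf_neq0 ?invr_neq0 ?phi_nz.
Qed.

Lemma good1 : good 1.
Proof. by exists 1, 1; split; [exact: pos1|exact: pos1|rewrite /phi rmorph1 divr1]. Qed.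

Lemma good_add a b : good a -> good b -> good (a + b).
Proof.
case=> P1 [Q1 [h1 h2 ->]] [P2 [Q2 [h3 h4 ->]]].
exists (P1 * Q2 + P2 * Q1), (Q1 * Q2); split.
- by apply: pos_add; apply: pos_mul.
- exact: pos_mul.
have n1 := phi_nz h2; have n2 := phi_nz h4.
rewrite (addf_div (phi P1) (phi P2) n1 n2).
by rewrite /phi rmorphD !rmorphM.
Qed.

Lemma good_mul a b : good a -> good b -> good (a * b).
Proof.
case=> P1 [Q1 [h1 h2 ->]] [P2 [Q2 [h3 h4 ->]]].
exists (P1 * P2), (Q1 * Q2); split; try exact: pos_mul.
have n1 := phi_nz h2; have n2 := phi_nz h4.
rewrite (mulf_div (phi P1) (phi Q1) (phi P2) (phi Q2)).
by rewrite /phi !rmorphM.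
Qed.

Lemma good_inv a : good a -> good a^-1.
Proof.
case=> P [Q [h1 h2 ->]]; exists Q, P; split => //.
by rewrite invf_div.
Qed.

Lemma good_x j : (1 <= j <= n.+1)%N -> good (x j).
Proof.
move=> hj; exists 'X_(inord j.-1), 1; split.
- by exists 0%N; rewrite mevalXU.
- exact: pos1.
rewrite /phi rmorph1 divr1 mmapX mmap1U inordK; last by lia.
by congr x; lia.
Qed.

Lemma good_val i j : (i <= n)%N -> (1 <= j <= n.+1)%N -> good (val n x i j).
Proof.
elim: i j => [|i IH] j hi hj; first by rewrite val0; exact: good_x.
move: hj; elim: j => [|j IHj] hj; first by lia.
case: (leqP j.+1 (n - i)) => hjn.
  rewrite (@val_succ _ n x i j.+1); last by apply/andP; split; lia.
    apply: good_mul; first by apply: good_inv; apply: IH; lia.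
    apply: good_add; last exact: good1.
    apply: good_mul; last by apply: IH; lia.
    case: (posnP j) => [->|jp] /=; first exact: good1.
    by rewrite ltnS jp; apply: IHj; lia.
  by lia.
rewrite val_succ_gt //; last by lia.
by apply: IH; lia.
Qed.

Lemma val_nz i j : (i <= n)%N -> (1 <= j <= n.+1)%N -> val n x i j != 0.
Proof. by move=> hi hj; apply: good_nz; apply: good_val. Qed.

Definition T (a d : nat) := if d == 0%N then 1 else val n x a d.
Definition M (a b : nat) := if (b < a)%N then 0 else T a (b - a)%N.

Lemma Ddiam a b : (a <= b <= n)%N -> M a b * M a.+1 b.+1 - M a.+1 b * M a b.+1 = 1.
Proof.
move=> /andP[hab hbn].
case: (eqVneq a b) => [<-|ne].
  by rewrite /M /T !ltnn ltnSn !subnn eqxx mul0r subr0 mulr1.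
have [k eb] : exists k, b = (a + k.+1)%N by exists (b - a).-1; lia.
rewrite eb /M.
have -> : (a + k.+1 < a)%N = false by lia.
have -> : ((a + k.+1).+1 < a.+1)%N = false by lia.
have -> : (a + k.+1 < a.+1)%N = false by lia.
have -> : ((a + k.+1).+1 < a)%N = false by lia.
have -> : (a + k.+1 - a = k.+1)%N by lia.
have -> : ((a + k.+1).+1 - a.+1 = k.+1)%N by lia.
have -> : (a + k.+1 - a.+1 = k)%N by lia.
have -> : ((a + k.+1).+1 - a = k.+2)%N by lia.
rewrite /T /=.
have han : (a <= n)%N by lia.
rewrite (@val_succ _ n x a k.+1) //; last by apply/andP; split; lia.
have vnz : val n x a k.+1 != 0 by apply: val_nz; lia.
case: (eqVneq k 0%N) => [ek|kn].
  rewrite ek /=.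
  by rewrite ek in vnz; apply: aux_div.
have -> : (1 < k.+1)%N by lia.
by apply: aux_div.
Qed.

Lemma Rec e : (e.+1 <= n)%N -> forall d a, (a + d = e.+1)%N ->
  M a e.+2 = M e.+1 e.+2 * M a e.+1 - M a e.
Proof.
move=> he; elim=> [|d IH] a had.
  have -> : a = e.+1 by lia.
  by rewrite /M /T ltnn subnn eqxx ltnSn mulr1 subr0.
have IH' := IH a.+1 (ltac:(lia)).
have D1 := @Ddiam a e.+1 (ltac:(apply/andP; split; lia)).
have D2 := @Ddiam a e (ltac:(apply/andP; split; lia)).
have Cnz : M a.+1 e.+1 != 0.
  rewrite /M; have -> : (e.+1 < a.+1)%N = false by lia.
  rewrite /T; case: ifP => h0; first exact: oner_neq0.
  by apply: val_nz; lia.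
have key : M a.+1 e.+1 * (M a e.+2 - (M e.+1 e.+2 * M a e.+1 - M a e)) =
  (M a e * M a.+1 e.+1 - M a.+1 e * M a e.+1)
  - (M a e.+1 * M a.+1 e.+2 - M a.+1 e.+1 * M a e.+2)
  + M a e.+1 * (M a.+1 e.+2 - (M e.+1 e.+2 * M a.+1 e.+1 - M a.+1 e)) by ring.
rewrite D1 D2 -IH' !subrr mulr0 addr0 in key.
move/eqP: key; rewrite mulf_eq0 (negbTE Cnz) /= subr_eq0 => /eqP //.
Qed.

Lemma xc_nat d a : xc n x d%:Z a = T a d.
Proof.
rewrite /xc /T; have -> : (d%:Z == -1) = false by lia.
have -> : (d%:Z == 0) = (d == 0)%N by lia.
by case: (d == 0)%N => //; have -> : `|d%:Z|%N = d by lia.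
Qed.

Lemma main_n : (1 <= n)%N -> forall i : nat, (i <= n.+1 - 2)%N ->
    xc n x (i%:Z + 2) 0 = xc n x 1 i.+1 * xc n x (i%:Z + 1) 0 - xc n x i%:Z 0 /\
    xc n x (i%:Z + 1) 1 = xc n x 1 i.+1 * xc n x i%:Z 1 - xc n x (i%:Z - 1) 1.
Proof.
move=> hn i hi.
have e1 : i%:Z + 2 = (i.+2)%:Z by lia.
have e2 : i%:Z + 1 = (i.+1)%:Z by lia.
have e3 : (1 : int) = (1%N)%:Z by [].
rewrite e1 e2 e3 !xc_nat.
have hT1 : T i.+1 1 = M i.+1 i.+2 by rewrite /M ltnNge leqnSn /= subSn // subnn.
have hi' : (i.+1 <= n)%N by lia.
split.
  have := Rec hi' (d := i.+1) (a := 0) (ltac:(lia)).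
  rewrite hT1 /M !subn0 /=.
  by [].
have := Rec hi' (d := i) (a := 1) (ltac:(lia)).
rewrite hT1 /M /=.
case: i hi hi' e1 e2 hT1 => [|i] hi hi' _ _ _.
  rewrite /xc; have -> : ((- 1%Z : int) == -1) by lia.
  have -> : (2 - 1 = 1)%N by [].
  by move=> _; rewrite /T /= mulr1 subr0.
have -> : (i.+1)%:Z - 1%Z = i%:Z by lia.
rewrite xc_nat.
have -> : (i.+3 - 1 = i.+2)%N by lia.
have -> : (i.+2 - 1 = i.+1)%N by lia.
have -> : (i.+1 - 1 = i)%N by lia.
have -> : (i.+3 < i.+2)%N = false by lia.
have -> : (i.+1 < 1)%N = false by lia.
by [].
Qed.

End Main.

Lemma cor_gen (K : idomainType) : (forall k : nat, (k.+1)%:R != 0 :> K) -> cor_stmt K.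
Proof. by move=> hK n hn x hx i hi; exact: main_n. Qed.

Theorem corollary7p2 :
  (forall K : fieldType, [pchar K]%R =i pred0 -> cor_stmt K) /\ cor_stmt int.
Proof.
split.
  move=> K hK; apply: cor_gen => k.
  by rewrite ((pcharf0P K).1 hK k.+1).
by apply: cor_gen => k; rewrite pnatr_eq0.
Qed.
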